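(* Let $L$ be an $R_0$-algebra and $k\in[0,1)$. Let $\{F_t\mid t\in\Lambda\}$, where $\Lambda\subseteq(0,\tfrac{1-k}{2}]$, be a collection of fated filters of $L$ such that (i) $L=\bigcup_{t\in\Lambda}F_t$, and (ii) for all $s,t\in\Lambda$, $s<t$ if and only if $F_t\subset F_s$. Then the fuzzy subset $\mu$ of $L$ defined by $\mu(x)=\sup\{t\in\Lambda\mid x\in F_t\}$ for all $x\in L$ is an $(\in,\in\vee q_k)$-fuzzy fated filter of $L$.
   Context: An $R_0$-algebra is a bounded distributive lattice $(L,\wedge,\vee,0,1)$ with an order-reversing involution $\neg$ and a binary operation $\to$ such that for all $x,y,z\in L$: $x\to y=\neg y\to\neg x$; $1\to x=x$; $(y\to z)\wedge((x\to y)\to(x\to z))=y\to z$; $x\to(y\to z)=y\to(x\to z)$; $x\to(y\vee z)=(x\to y)\vee(x\to z)$; $(x\to y)\vee((x\to y)\to(\neg x\vee y))=1$. A fated filter of $L$ is a nonempty subset $A\subseteq L$ with $1\in A$ such that for all $x,y\in L$ and $a\in A$, $a\to((x\to y)\to x)\in A$ implies $x\in A$. For $x\in L$, $t\in(0,1]$ and a fuzzy subset $\mu:L\to[0,1]$: $x_t\in\mu$ iff $\mu(x)\ge t$; $x_t\,q_k\,\mu$ iff $\mu(x)+t+k>1$; $x_t\in\vee q_k\,\mu$ iff $x_t\in\mu$ or $x_t\,q_k\,\mu$. $\mu$ is an $(\in,\in\vee q_k)$-fuzzy fated filter of $L$ if (1) for all $x\in L$, $t\in(0,1]$: $x_t\in\mu\Rightarrow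 1_t\in\vee q_k\,\mu$; and (2) for all $x,a,y\in L$, $t,s\in(0,1]$: if $(a\to((x\to y)\to x))_t\in\mu$ and $a_s\in\mu$ then $x_{\min\{t,s\}}\in\vee q_k\,\mu$. *)

(* Defs.v *)
From mathcomp Require Import all_boot all_order all_algebra.
From mathcomp Require Import boolp classical_sets reals.

Set Implicit Arguments.
Unset Strict Implicit.
Unset Printing Implicit Defensive.

Import Order.TTheory GRing.Theory Num.Theory.
Local Open Scope ring_scope.

(* The lattice order is x <= y :<-> meet x y = x. *)
Record R0_algebra (L : Type) := R0Alg {
  meet : L -> L -> L;
  join : L -> L -> L;
  bot : L;
  top : L;
  neg : L -> L;
  imp : L -> L -> L;
  meetC : forall x y, meet x y = meet y x;
  joinC : forall x y, join x y = join y x;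
  meetA : forall x y z, meet x (meet y z) = meet (meet x y) z;
  joinA : forall x y z, join x (join y z) = join (join x y) z;
  meetKj : forall x y, meet x (join x y) = x;
  joinKm : forall x y, join x (meet x y) = x;
  meetDj : forall x y z, meet x (join y z) = join (meet x y) (meet x z);
  meet_bot : forall x, meet bot x = bot;
  meet_top : forall x, meet top x = x;
  negK : forall x, neg (neg x) = x;
  neg_rev : forall x y, meet x y = x -> meet (neg y) (neg x) = neg y;
  r0_contra : forall x y, imp x y = imp (neg y) (neg x);
  r0_top : forall x, imp top x = x;
  r0_3 : forall x y z, meet (imp y z) (imp (imp x y) (imp x z)) = imp y z;
  r0_exch : forall x y z, imp x (imp y z) = imp y (imp x z);
  r0_join : forall x y z, imp x (join y z) = join (imp x y) (imp x z);
  r0_6 : forall x y, join (imp x y) (imp (imp x y) (join (neg x) y)) = top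
}.

Definition fated_filter (L : Type) (A : R0_algebra L) (F : L -> Prop) : Prop :=
  (exists x, F x) /\ F (top A) /\
  forall x y a, F a -> F (imp A a (imp A (imp A x y) x)) -> F x.

Section Fuzzy.
Variable R : realType.

Definition fin (L : Type) (mu : L -> R) (x : L) (t : R) : Prop := t <= mu x.
Definition fq (k : R) (L : Type) (mu : L -> R) (x : L) (t : R) : Prop :=
  mu x + t + k > 1.
Definition finq (k : R) (L : Type) (mu : L -> R) (x : L) (t : R) : Prop :=
  fin mu x t \/ fq k mu x t.

Definition in_inq_fuzzy_fated_filter (k : R) (L : Type) (A : R0_algebra L)
    (mu : L -> R) : Prop :=
  (forall x, 0 <= mu x <= 1) /\
  (forall x t, 0 < t <= 1 -> fin mu x t -> finq k mu (top A) t) /\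
  (forall x a y t s, 0 < t <= 1 -> 0 < s <= 1 ->
     fin mu (imp A a (imp A (imp A x y) x)) t -> fin mu a s ->
     finq k mu x (Num.min t s)).
End Fuzzy.

(* Main.v *)
Require Import Defs.
From mathcomp Require Import all_boot all_order all_algebra.
From mathcomp Require Import boolp classical_sets reals.
From mathcomp Require Import lra.
Import Order.TTheory GRing.Theory Num.Theory.
Local Open Scope ring_scope.
Local Open Scope classical_set_scope.

Theorem theorem3p28 (R : realType) (L : Type) (A : R0_algebra L) (k : R)
  (Lam : set R) (F : R -> L -> Prop) :
  0 <= k < 1 ->
  (forall t, Lam t -> 0 < t <= (1 - k) / 2) ->
  (forall t, Lam t -> fated_filter A (F t)) ->
  (forall x : L, exists2 t, Lam t & F t x) ->
  (forall s t, Lam s -> Lam t ->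
     (s < t <-> ((forall x, F t x -> F s x) /\ exists x, F s x /\ ~ F t x))) ->
  in_inq_fuzzy_fated_filter k A
    (fun x => sup [set t | Lam t /\ F t x]).
Proof.
move=> /andP[k0 k1] Hb Hf Hcov Hord.
set S := fun x => [set t | Lam t /\ F t x].
have bnd : (1 - k) / 2 <= 1.
  rewrite ler_pdivrMr // mul1r; lra.
have hs : forall x, has_sup (S x).
  move=> x; split; first by case: (Hcov x) => t Lt Ft; exists t.
  exists ((1 - k) / 2) => t [Lt _]; by case/andP: (Hb t Lt).
have ub : forall x t, Lam t -> F t x -> t <= sup (S x).
  by move=> x t Lt Ft; apply: (sup_upper_bound (hs x)).
have down : forall w u z, Lam w -> Lam u -> w <= u -> F u z -> F w z.
  move=> w u z Lw Lu; rewrite le_eqVlt => /orP[/eqP -> //|wu].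
  by case: ((Hord w u Lw Lu).1 wu) => H _; apply: H.
split; [|split].
- move=> x; case: (Hcov x) => t Lt Ft.
  have := ub x t Lt Ft; case/andP: (Hb t Lt) => t0 t1 h.
  apply/andP; split; first by apply: le_trans h; exact: ltW.
  apply: ge_sup; first by exists t.
  move=> u [Lu _]; case/andP: (Hb u Lu) => _ u1; exact: le_trans u1 bnd.
- move=> x t _ Hx; left; rewrite /fin in Hx *.
  apply: (le_trans Hx); apply: ge_sup; first by case: (Hcov x) => u Lu Fu; exists u.
  move=> u [Lu Fu]; apply: ub => //.
  by case: (Hf u Lu) => _ [].
- move=> x a y t s _ _ Hbt Has; left; rewrite /fin in Hbt Has *.
  set b := imp A a (imp A (imp A x y) x) in Hbt.
  have key : Num.min (sup (S b)) (sup (S a)) <= sup (S x).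
    rewrite leNgt; apply/negP => lt.
    have [lb la] : sup (S x) < sup (S b) /\ sup (S x) < sup (S a).
      by move: lt; rewrite lt_min => /andP[].
    have [u [Lu Fu] xu] := sup_gt (hs b).1 lb.
    have [v [Lv Fv] xv] := sup_gt (hs a).1 la.
    have [w [Lw [Fbw [Faw xw]]]] : exists w, Lam w /\ F w b /\ F w a /\ sup (S x) < w.
      case: (leP u v) => uv.
      + exists u; split=> //; split=> //; split=> //; exact: (down u v a).
      + exists v; split=> //; split; last by [].
        apply: (down v u b) => //; exact: ltW.
    have Fxw : F w x by case: (Hf w Lw) => _ [_ H]; exact: (H x y a).
    by move: (ub x w Lw Fxw); rewrite leNgt xw.
  apply: le_trans key; rewrite le_min !ge_min Hbt Has orbT /=.
  by [].
Qed.
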